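(* Let $k$ be a field of characteristic $0$ and let $F(X,Y), G(X,Y)\in k[X,Y]$. Assume there exist $A(X,Y), B(X,Y)\in k[X,Y]$ such that $$A(F(X,Y),G(X,Y))=X,\quad B(F(X,Y),G(X,Y))=Y,\quad F(A(X,Y),B(X,Y))=X,\quad G(A(X,Y),B(X,Y))=Y.$$ Then there exist $\mathcal{X}(t), \mathcal{Y}(t)\in k[X,Y][t]$ such that $$F(\mathcal{X}(t),\mathcal{Y}(t))=tX+(1-t)F(X,Y),\qquad G(\mathcal{X}(t),\mathcal{Y}(t))=tY+(1-t)G(X,Y),$$ with $\mathcal{X}(0)=X$, $\mathcal{Y}(0)=Y$, $\mathcal{X}(1)=A(X,Y)$ and $\mathcal{Y}(1)=B(X,Y)$. Moreover, the degree in $t$ of $\mathcal{X}(t)$ and of $\mathcal{Y}(t)$ is at most $\max\{\deg F(X,Y), \deg G(X,Y)\}$.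
   Context: For a polynomial $F\in k[X,Y]$, $\deg(F)$ denotes the total degree (maximum total degree of the monomials occurring in $F$). *)

(* Defs.v *)
From mathcomp Require Import all_boot all_order all_algebra.
From mathcomp Require Import multinomials.mpoly.
Set Implicit Arguments. Unset Strict Implicit. Unset Printing Implicit Defensive.
Import GRing.Theory.
Local Open Scope ring_scope.

(* k[X,Y] is {mpoly k[2]}, X = 'X_0, Y = 'X_1; k[X,Y][t] is {poly {mpoly k[2]}}. *)

(* total degree of a bivariate polynomial (msize p = 1 + total degree, 0 for p = 0) *)
Definition tdeg (k : fieldType) (p : {mpoly k[2]}) : nat := (msize p).-1.

Definition subst2 (k : fieldType) (P U V : {mpoly k[2]}) : {mpoly k[2]} :=
  P \mPo [tuple U; V].

(* substitution P(U(t),V(t)) for P in k[X,Y], U(t) V(t) in k[X,Y][t] *)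
Definition subst2t (k : fieldType) (P : {mpoly k[2]}) (U V : {poly {mpoly k[2]}})
  : {poly {mpoly k[2]}} :=
  mmap (fun c : k => (c%:MP)%:P) (fun i : 'I_2 => if i == ord0 then U else V) P.

(* Main.v *)
Require Import Defs.
From mathcomp Require Import all_boot all_order all_algebra.
From mathcomp Require Import multinomials.mpoly.
From mathcomp Require Import zify ring.
Import GRing.Theory.
Local Open Scope ring_scope.

Lemma mmap_eq2 n (R S : ringType) (f1 f2 : R -> S) (h1 h2 : 'I_n -> S) p :
  f1 =1 f2 -> h1 =1 h2 -> mmap f1 h1 p = mmap f2 h2 p.
Proof. by move=> ef eh; rewrite /mmap; apply: eq_bigr => m _; rewrite ef (mmap1_eq _ eh). Qed.

Lemma rmorph_mmap n (R : ringType) (S T : nzRingType) (f : R -> S) (h : 'I_n -> S)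
  (phi : {rmorphism S -> T}) p :
  phi (mmap f h p) = mmap (phi \o f) (phi \o h) p.
Proof.
rewrite /mmap rmorph_sum; apply: eq_bigr => m _; rewrite rmorphM /mmap1 rmorph_prod.
by congr (_ * _); apply: eq_bigr => i _; rewrite rmorphXn.
Qed.

Lemma mmap_comp n k0 (R : ringType) (S : comRingType) (f : {rmorphism R -> S})
  (h : 'I_k0 -> S) (p : {mpoly R[n]}) (lq : n.-tuple {mpoly R[k0]}) :
  mmap f h (p \mPo lq) = mmap f (fun i => mmap f h (tnth lq i)) p.
Proof.
rewrite comp_mpolyE raddf_sum /= [RHS]/mmap; apply: eq_bigr => m _.
rewrite mmapZ rmorph_prod /mmap1; congr (_ * _); apply: eq_bigr => i _.
by rewrite rmorphXn.
Qed.

Lemma mmapXi n (R : ringType) (S : comRingType) (f : {rmorphism R -> S}) h (i : 'I_n) :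
  mmap f h 'X_i = h i.
Proof. by rewrite mmapX mmap1U. Qed.

Lemma size_mmap n (R : ringType) (K : fieldType) (f : R -> {poly K})
  (h : 'I_n -> {poly K}) d p :
  (forall c, (size (f c) <= 1)%N) -> (forall i, (size (h i) <= d.+1)%N) ->
  (size (mmap f h p) <= ((msize p).-1 * d).+1)%N.
Proof.
move=> hf hh; rewrite /mmap big_seq.
apply: (big_ind (fun q : {poly K} => (size q <= ((msize p).-1 * d).+1)%N)).
- by rewrite size_poly0.
- by move=> x y hx hy; rewrite (leq_trans (size_polyD _ _)) // geq_max hx hy.
move=> m /msize_mdeg_lt hm.
have h1 : (size (mmap1 h m) <= (mdeg m * d).+1)%N.
  rewrite /mmap1 mdegE big_distrl /=.
  elim/big_rec2: _ => [|j s q _ IH]; first by rewrite size_poly1.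
  rewrite (leq_trans (size_polyMleq _ _)) //.
  have := size_poly_exp_leq (h j) (m j); have := hh j.
  move: IH; set a := size (h j ^+ m j); set b := size (h j); set z := size q.
  move=> IH hb ha. have : ((b.-1 * m j) <= d * m j)%N by rewrite leq_mul2r; apply/orP; right; lia.
  lia.
have h2 := hf (p@_m).
rewrite (leq_trans (size_polyMleq _ _)) //.
have : (mdeg m * d <= (msize p).-1 * d)%N by rewrite leq_mul2r; apply/orP; right; lia.
move: h1 h2; set X := (mdeg m * d)%N; set Y := ((msize p).-1 * d)%N.
set u := size (f _); set v := size (mmap1 h m); lia.
Qed.

Lemma dvdp_mmap n (R : ringType) (K : fieldType) (f : R -> {poly K})
  (g g' : 'I_n -> {poly K}) (q : {poly K}) p :
  (forall i, q %| g i - g' i) -> q %| mmap f g p - mmap f g' p.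
Proof.
move=> hg; rewrite /mmap -sumrB.
apply: (big_ind (fun x : {poly K} => q %| x)) => //; first by move=> x y; apply: dvdp_add.
move=> m _; rewrite -mulrBr dvdp_mull //.
rewrite /mmap1; apply: (big_ind2 (fun x y : {poly K} => q %| x - y)).
- by rewrite subrr dvdp0.
- move=> a b c d h1 h2.
  have -> : a * c - b * d = a * (c - d) + (a - b) * d :> {poly K}.
    by rewrite mulrBr mulrBl addrA subrK.
  by apply: dvdp_add; [apply: dvdp_mull | apply: dvdp_mulr].
- by move=> i _; rewrite subrXX dvdp_mulr.
Qed.

Lemma CU (K : fieldType) (q w h tau : {poly K}) : h != 0 ->
  q %| h \Po w -> q %| 'X - (tau \Po w) -> ((size q).-1 <= (size h).-1)%N.
Proof.
move=> hn0 qh qt.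
rewrite leqNgt; apply/negP => lt.
set D := (size q).-1 in lt. set e := (size h).-1 in lt.
have qn0 : q != 0.
  by apply: contraTneq lt; rewrite /D => ->; rewrite size_poly0.
pose r (j : 'I_D) := (tau ^+ j) %% h.
have szr j : (size (r j) <= e)%N.
  by rewrite -ltnS /e prednK ?size_poly_gt0 // ltn_modp.
have dv (j : 'I_D) : q %| 'X^j - ((r j) \Po w).
  have E : 'X^j - ((r j) \Po w) = ('X^j - (tau \Po w)^+j)
            + ((tau^+j %/ h) \Po w) * (h \Po w).
    have -> : (tau \Po w)^+j = (tau^+j) \Po w by rewrite rmorphXn.
    rewrite {1}(divp_eq (tau^+j) h) comp_polyD comp_polyM /r; ring.
  rewrite E dvdp_add //; last by rewrite dvdp_mull.
  by rewrite subrXX dvdp_mulr.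
pose Mx := \matrix_(j < D, l < e) (r j)`_l.
have rk : (0 < \rank (kermx Mx))%N.
  by rewrite mxrank_ker subn_gt0 (leq_ltn_trans (rank_leq_col Mx) lt).
have [k0 hk0]: exists k0, row k0 (kermx Mx) != 0.
  apply/existsP; apply: contraTT rk => /existsPn allz.
  rewrite -leqNgt leqn0 mxrank_eq0; apply/eqP/row_matrixP => i.
  by rewrite row0; have := allz i; rewrite negbK => /eqP.
set v := row k0 (kermx Mx) in hk0.
have vM : v *m Mx = 0 by rewrite /v -row_mul mulmx_ker row0.
have [j0 hj0]: exists j0, v 0 j0 != 0.
  apply/existsP; apply: contraTT hk0 => /existsPn allz.
  rewrite negbK; apply/eqP/matrixP => i j; rewrite (ord1 i) [RHS]mxE.
  by have := allz j; rewrite negbK => /eqP.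
pose s := \sum_(j < D) v 0 j *: 'X^j.
have s_ne0 : s != 0.
  apply: contraNneq hj0 => s0.
  have : s`_j0 = 0 by rewrite s0 coef0.
  rewrite /s coef_sum (bigD1 j0) //= coefZ coefXn eqxx mulr1 big1 ?addr0; first by move/eqP.
  by move=> j hj; rewrite coefZ coefXn eq_sym val_eqE (negbTE hj) mulr0.
have s_sz : (size s <= D)%N.
  apply: (big_ind (fun p : {poly K} => (size p <= D)%N)).
  - by rewrite size_poly0.
  - by move=> x y hx hy; rewrite (leq_trans (size_polyD _ _)) // geq_max hx hy.
  - by move=> j _; rewrite (leq_trans (size_scale_leq _ _)) // size_polyXn.
have u0 : \sum_(j < D) v 0 j *: r j = 0.
  apply/polyP => l; rewrite coef_sum coef0; case: (ltnP l e) => hl.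
    have := congr1 (fun M : 'M[K]_(1,e) => M 0 (Ordinal hl)) vM.
    rewrite /= !mxE => H; apply: etrans H; apply: eq_bigr => j _.
    by rewrite coefZ; congr (_ * _); rewrite /Mx mxE.
  apply: big1 => j _; rewrite coefZ nth_default ?mulr0 //.
  exact: leq_trans (szr j) hl.
have qs : q %| s.
  have -> : s = s - ((\sum_(j < D) v 0 j *: r j) \Po w).
    by rewrite u0 rmorph0 subr0.
  rewrite linear_sum /s -sumrB.
  apply: (big_ind (fun p : {poly K} => q %| p)) => //.
  - by move=> x y; apply: dvdp_add.
  - by move=> j _; rewrite linearZ /= -scalerBr -mul_polyC dvdp_mull.
have := dvdp_leq s_ne0 qs.
move: lt s_sz; rewrite /D; case: (size q) => //= n _.
by move=> h1 h2; have := leq_trans h2 h1; rewrite ltnn.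
Qed.

Lemma I2 (j : 'I_2) : j = 0 \/ j = 1.
Proof. by case: j => [[|[|//]]] ?; [left|right]; apply: val_inj. Qed.

Theorem core (k K : fieldType) (f : {rmorphism k -> {poly K}})
  (hf : forall c, (size (f c) <= 1)%N)
  (F G A B : {mpoly k[2]})
  (hA : A \mPo [tuple F; G] = 'X_0) (hB : B \mPo [tuple F; G] = 'X_1)
  (hF : F \mPo [tuple A; B] = 'X_0) (hG : G \mPo [tuple A; B] = 'X_1)
  (c e : 'I_2 -> K) (M : nat)
  (hMF : ((msize F).-1 <= M)%N) (hMG : ((msize G).-1 <= M)%N) (i : 'I_2) :
  ((size (mmap f (fun j => ((c j)%:P + e j *: 'X)%R) (if i == ord0 then A else B))).-1 <= M)%N.
Proof.
set l := fun j => _.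
pose Inv (j : 'I_2) := if j == ord0 then A else B.
pose Fam (j : 'I_2) := if j == ord0 then F else G.
pose P j := mmap f l (Inv j).
change (((size (P i)).-1 <= M)%N).
have tAB j : tnth [tuple A; B] j = Inv j by case: (I2 j) => ->.
have tFG j : tnth [tuple F; G] j = Fam j by case: (I2 j) => ->.
have hFam j : Fam j \mPo [tuple A; B] = 'X_j by case: (I2 j) => ->.
have hInv j : Inv j \mPo [tuple F; G] = 'X_j by case: (I2 j) => ->.
have hMj j : ((msize (Fam j)).-1 <= M)%N by case: (I2 j) => ->.
have hP j : mmap f P (Fam j) = l j.
  rewrite -(@mmapXi _ _ _ f l j) -(hFam j) mmap_comp.
  by apply: mmap_eq2 => [x|m] //; rewrite tAB.
have [o [oi ho]] : exists o : 'I_2, o != i /\ forall j, j != i -> j = o.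
  by case: (I2 i) => ->; [exists 1|exists 0]; split => // j;
     case: (I2 j) => ->.
pose pt (j : 'I_2) : {poly K} := if j == i then 0 else 'X.
pose g' (j : 'I_2) := if j == i then 0 else P j.
have fC x w : f x \Po w = f x by rewrite (size1_polyC (hf x)) comp_polyC.
have hC p : mmap f g' p = (mmap f pt p) \Po P o.
  rewrite (@rmorph_mmap _ _ _ _ _ _ (comp_poly (P o))).
  apply: mmap_eq2 => [x|m] /=; first by rewrite fC.
  rewrite /g' /pt; case: eqP => [_|/eqP hm]; first by rewrite rmorph0.
  by rewrite comp_polyX (ho m hm).
have hD j : P i %| mmap f P (Fam j) - mmap f g' (Fam j).
  apply: dvdp_mmap => m; rewrite /g'; case: eqP => [->|_].
    by rewrite subr0 dvdpp.
  by rewrite subrr dvdp0.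
pose aa j := mmap f pt (Fam j) - (c j)%:P.
have hFa j : P i %| e j *: 'X - (aa j \Po P o).
  have E : e j *: 'X - (aa j \Po P o) = mmap f P (Fam j) - mmap f g' (Fam j).
    by rewrite hP hC /aa /l /= rmorphB /= comp_polyC; ring.
  by rewrite E hD.
case: (boolP [forall j, e j == 0]) => [/forallP e0 | /forallPn [j1 ej1]].
  have : (size (P i) <= ((msize (Inv i)).-1 * 0).+1)%N.
    apply: size_mmap => // j.
    by rewrite /l /= (eqP (e0 j)) scale0r addr0 size_polyC leq_b1.
  by rewrite muln0; case: (size (P i)) => [|[|]].
pose tau := (e j1)^-1 *: aa j1.
have hT : P i %| 'X - (tau \Po P o).
  have E : 'X - (tau \Po P o) = (e j1)^-1 *: (e j1 *: 'X - (aa j1 \Po P o)).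
    by rewrite /tau linearZ /= scalerBr scalerA mulVf // scale1r.
  by rewrite E -mul_polyC dvdp_mull.
pose hh := e 1 *: aa 0 - e 0 *: aa 1.
have hH : P i %| hh \Po P o.
  have E : hh \Po P o = (e 0)%:P * (e 1 *: 'X - (aa 1 \Po P o))
                      - (e 1)%:P * (e 0 *: 'X - (aa 0 \Po P o)).
    by rewrite /hh rmorphB /= !linearZ /= -!mul_polyC; ring.
  by rewrite E; apply: dvdp_sub; apply: dvdp_mull.
case: (eqVneq hh 0) => [hh0|hhn0].
  have key j j' : e j' *: aa j = e j *: aa j'.
    have := subr0_eq hh0.
    by case: (I2 j) => ->; case: (I2 j') => -> //.
  have hL j : l j \Po tau = mmap f pt (Fam j).
    rewrite /l /= rmorphD /= comp_polyC linearZ /= comp_polyX.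
    have -> : e j *: tau = aa j.
      by rewrite /tau scalerA mulrC -scalerA -(key j j1) scalerA mulVf // scale1r.
    by rewrite /aa addrC subrK.
  have hZ m : P m \Po tau = pt m.
    rewrite /P (@rmorph_mmap _ _ _ _ _ _ (comp_poly tau)).
    transitivity (mmap f pt (Inv m \mPo [tuple F; G])).
      rewrite mmap_comp; apply: mmap_eq2 => [x|j] /=; first by rewrite fC.
      by rewrite tFG hL.
    by rewrite hInv mmapXi.
  have tau_gt1 : (1 < size tau)%N.
    rewrite ltnNge; apply/negP => st.
    have := hZ o; rewrite (size1_polyC st) comp_polyCr /pt (negbTE oi).
    move=> E; have := congr1 (fun p : {poly K} => size p) E; rewrite /= size_polyX size_polyC.
    by case: (_ != 0).
  have := hZ i; rewrite /pt eqxx => E; have := congr1 (fun p : {poly K} => lead_coef p) E; rewrite /=.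
  rewrite lead_coef_comp // lead_coef0 => /eqP.
  rewrite mulf_eq0 expf_eq0 !lead_coef_eq0 => /orP [/eqP -> | /andP [_ /eqP t0]].
    by rewrite size_poly0.
  by rewrite t0 size_poly0 in tau_gt1.
have szaa j : (size (aa j) <= M.+1)%N.
  rewrite /aa (leq_trans (size_polyD _ _)) // geq_max size_polyN.
  rewrite size_polyC (leq_trans (leq_b1 _)) // andbT.
  apply: (leq_trans (@size_mmap _ _ _ f _ 1 _ hf _)).
    by move=> m; rewrite /pt; case: eqP => _; rewrite ?size_poly0 ?size_polyX.
  by rewrite muln1 ltnS.
have szh : (size hh <= M.+1)%N.
  rewrite /hh (leq_trans (size_polyD _ _)) // geq_max size_polyN.
  by rewrite !(leq_trans (size_scale_leq _ _)) ?szaa.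
have := @CU _ _ _ _ _ hhn0 hH hT.
move=> h2; apply: (leq_trans h2); move: szh; by case: (size hh).
Qed.


Theorem lemma3p1 (k : fieldType) (chark : [pchar k] =i pred0)
  (F G A B : {mpoly k[2]}) :
  subst2 A F G = 'X_0 -> subst2 B F G = 'X_1 ->
  subst2 F A B = 'X_0 -> subst2 G A B = 'X_1 ->
  exists Xt Yt : {poly {mpoly k[2]}},
    [/\ subst2t F Xt Yt = 'X * ('X_0)%:P + (1 - 'X) * F%:P,
        subst2t G Xt Yt = 'X * ('X_1)%:P + (1 - 'X) * G%:P,
        Xt.[0] = 'X_0 /\ Yt.[0] = 'X_1,
        Xt.[1] = A /\ Yt.[1] = B &
        ((size Xt).-1 <= maxn (tdeg F) (tdeg G))%N /\
        ((size Yt).-1 <= maxn (tdeg F) (tdeg G))%N].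
Proof.
move=> hA hB hF hG; rewrite /subst2 in hA hB hF hG.
pose L0 : {poly {mpoly k[2]}} := 'X * ('X_0)%:P + (1 - 'X) * F%:P.
pose L1 : {poly {mpoly k[2]}} := 'X * ('X_1)%:P + (1 - 'X) * G%:P.
pose L (j : 'I_2) := if j == ord0 then L0 else L1.
have sE (p : {mpoly k[2]}) (U V : {poly {mpoly k[2]}}) : subst2t p U V = mmap (polyC \o @mpolyC 2 k) (fun i => if i == ord0 then U else V) p by [].
have c0 : forall T (a b : T), (if (0:'I_2) == ord0 then a else b) = a by [].
have c1 : forall T (a b : T), (if (1:'I_2) == ord0 then a else b) = b by [].
have t0 : tnth [tuple A; B] 0 = A by [].
have t1 : tnth [tuple A; B] 1 = B by [].
have LE (p : {mpoly k[2]}) : subst2t p L0 L1 = mmap (polyC \o @mpolyC 2 k) L p.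
  by rewrite sE; apply: mmap_eq2.
have ev p : subst2t p (subst2t A L0 L1) (subst2t B L0 L1)
            = mmap (polyC \o @mpolyC 2 k) L (p \mPo [tuple A; B]).
  rewrite mmap_comp sE; apply: mmap_eq2 => [x|j]; first by [].
  case: (I2 j) => ->; [apply: etrans (LE A) _ | apply: etrans (LE B) _];
    by apply: mmap_eq2 => [x|y]; reflexivity.
have hev (x : {mpoly k[2]}) (T : 2.-tuple {mpoly k[2]}) (hx : forall j, (L j).[x] = tnth T j) p :
    (mmap (polyC \o @mpolyC 2 k) L p).[x] = p \mPo T.
  have := @rmorph_mmap _ _ _ _ (polyC \o @mpolyC 2 k) L (horner_eval x) p.
  move=> H; apply: (etrans H); apply: mmap_eq2 => [c|j] /=.
    exact: hornerC.
  exact: hx j.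
pose M := maxn (tdeg F) (tdeg G).
have L0E : L0 = F%:P + ('X_0 - F) *: 'X by rewrite /L0 -mul_polyC polyCB; ring.
have L1E : L1 = G%:P + ('X_1 - G) *: 'X by rewrite /L1 -mul_polyC polyCB; ring.
have ML0 : map_poly (@tofrac {mpoly k[2]}) L0 = (tofrac F)%:P + tofrac ('X_0 - F) *: 'X.
  by rewrite L0E rmorphD /= map_polyC map_polyZ map_polyX; reflexivity.
have ML1 : map_poly (@tofrac {mpoly k[2]}) L1 = (tofrac G)%:P + tofrac ('X_1 - G) *: 'X.
  by rewrite L1E rmorphD /= map_polyC map_polyZ map_polyX; reflexivity.
pose fK := (map_poly (@tofrac {mpoly k[2]}) \o (polyC \o @mpolyC 2 k)).
have szK p : size (mmap (polyC \o @mpolyC 2 k) L p) =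
   size (mmap fK (fun j => ((tofrac (if j == ord0 then F else G))%:P
               + tofrac ((if j == ord0 then 'X_0 else 'X_1) - (if j == ord0 then F else G)) *: 'X)%R) p).
  rewrite -(size_map_inj_poly (f := @tofrac {mpoly k[2]})); last first.
  - by rewrite rmorph0.
  - by move=> x y /eqP; rewrite tofrac_eq => /eqP.
  rewrite (@rmorph_mmap _ _ _ _ _ _ (map_poly (@tofrac {mpoly k[2]}))).
  apply: (congr1 (fun q : {poly _} => size q)); apply: mmap_eq2 => // j /=.
  by case: (I2 j) => ->; [exact: ML0 | exact: ML1].
have hf c : (size (fK c) <= 1)%N by rewrite /fK /= map_polyC size_polyC leq_b1.
have hMF : ((msize F).-1 <= M)%N by rewrite /M leq_maxl.
have hMG : ((msize G).-1 <= M)%N by rewrite /M leq_maxr.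
have C0 := @core k _ fK hf F G A B hA hB hF hG (fun j => tofrac (if j == ord0 then F else G))
   (fun j => tofrac ((if j == ord0 then 'X_0 else 'X_1) - (if j == ord0 then F else G))) M hMF hMG ord0.
have C1 := @core k _ fK hf F G A B hA hB hF hG (fun j => tofrac (if j == ord0 then F else G))
   (fun j => tofrac ((if j == ord0 then 'X_0 else 'X_1) - (if j == ord0 then F else G))) M hMF hMG 1.
exists (subst2t A L0 L1), (subst2t B L0 L1); split.
- by rewrite ev hF mmapXi.
- by rewrite ev hG mmapXi.
- have L00 : L0.[0] = F by rewrite L0E hornerD hornerC hornerZ hornerX mulr0 addr0.
  have L10 : L1.[0] = G by rewrite L1E hornerD hornerC hornerZ hornerX mulr0 addr0.
  have hx0 : forall j, (L j).[0] = tnth [tuple F; G] j.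
    by move=> j; case: (I2 j) => ->; [exact: L00 | exact: L10].
  split; rewrite LE (hev 0 [tuple F; G] hx0); [exact: hA | exact: hB].
- have L01 : L0.[1] = 'X_0 by rewrite L0E hornerD hornerC hornerZ hornerX mulr1 addrC subrK.
  have L11 : L1.[1] = 'X_1 by rewrite L1E hornerD hornerC hornerZ hornerX mulr1 addrC subrK.
  have hx1 : forall j, (L j).[1] = tnth [tuple 'X_i | i < 2] j.
    move=> j; rewrite tnth_mktuple.
    by case: (I2 j) => ->; [exact: L01 | exact: L11].
  by split; rewrite LE (hev 1 _ hx1) comp_mpoly_id.
- by split; rewrite LE szK; [exact: C0 | exact: C1].
Qed.
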